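(* Let $R$ be a ring with identity. Then $R$ is pseudopolar if and only if $R$ is both strongly $\pi$-rad clean and quasipolar.
   Context: $J(R)$ is the Jacobson radical and $U(R)$ the unit group of $R$. $\mathrm{comm}(a)=\{x\in R\mid xa=ax\}$, $\mathrm{comm}^2(a)=\{x\in R\mid xy=yx\text{ for all }y\in\mathrm{comm}(a)\}$; $R^{qnil}=\{a\in R\mid 1+ax\in U(R)\text{ for all }x\in\mathrm{comm}(a)\}$. An element $a$ is quasipolar if there is an idempotent $p\in\mathrm{comm}^2(a)$ with $a+p\in U(R)$ and $ap\in R^{qnil}$. An element $a$ is pseudopolar if there exist an idempotent $p\in\mathrm{comm}^2(a)$ and $k\in\mathbb{N}$ with $a+p\in U(R)$ and $a^kp\in J(R)$. An element $a$ is strongly $\pi$-rad clean if there is an idempotent $e\in R$ with $ae=ea$, $a-e\in U(R)$, and $a^ne\in J(R)$ for some $n\in\mathbb{N}$. The ring $R$ has one of these properties if every element does. *)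

(* Defs.v *)
From HB Require Import structures.
From mathcomp Require Import all_boot all_order all_algebra.
Set Implicit Arguments. Unset Strict Implicit. Unset Printing Implicit Defensive.
Import GRing.Theory.
Local Open Scope ring_scope.

Section Defs.
Variable R : pzRingType.

Definition in_U (a : R) : Prop := exists b : R, a * b = 1 /\ b * a = 1.

(* a ∈ J(R): standard elementwise description of the Jacobson radical,
   a ∈ J(R) iff 1 - x a is a unit for every x ∈ R. *)
Definition in_J (a : R) : Prop := forall x : R, in_U (1 - x * a).

Definition in_comm (a x : R) : Prop := x * a = a * x.

Definition in_comm2 (a x : R) : Prop :=
  forall y : R, in_comm a y -> x * y = y * x.

Definition in_qnil (a : R) : Prop :=
  forall x : R, in_comm a x -> in_U (1 + a * x).

Definition idempotent (p : R) : Prop := p * p = p.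

Definition quasipolar (a : R) : Prop :=
  exists p : R, [/\ idempotent p, in_comm2 a p, in_U (a + p) & in_qnil (a * p)].

(* ℕ = positive integers *)
Definition pseudopolar (a : R) : Prop :=
  exists (p : R) (k : nat),
    [/\ idempotent p, in_comm2 a p, in_U (a + p), (0 < k)%N & in_J (a ^+ k * p)].

Definition strongly_pi_rad_clean (a : R) : Prop :=
  exists (e : R) (n : nat),
    [/\ idempotent e, a * e = e * a, in_U (a - e), (0 < n)%N & in_J (a ^+ n * e)].

Definition quasipolar_ring : Prop := forall a : R, quasipolar a.
Definition pseudopolar_ring : Prop := forall a : R, pseudopolar a.
Definition strongly_pi_rad_clean_ring : Prop := forall a : R, strongly_pi_rad_clean a.

End Defs.

(* Main.v *)
Require Import Defs.
From HB Require Import structures.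
From mathcomp Require Import all_boot all_order all_algebra.
Import GRing.Theory.
Local Open Scope ring_scope.
Set Implicit Arguments. Unset Strict Implicit.

Ltac cm2 := lazymatch goal with
 | |- GRing.comm _ (_ + _) => apply: commrD; cm2
 | |- GRing.comm _ (- _) => apply: commrN; cm2
 | |- GRing.comm _ (_ * _) => apply: commrM; cm2
 | |- GRing.comm _ (_ ^+ _) => apply: commrX; cm2
 | |- GRing.comm _ 1 => apply: commr1
 | |- GRing.comm _ 0 => apply: commr0
 | |- _ => first [exact: commr_refl | assumption | (apply: commr_sym; assumption)]
 end.
Ltac cm := lazymatch goal with
 | |- GRing.comm _ (_ + _) => apply: commrD; cm
 | |- GRing.comm _ (- _) => apply: commrN; cm
 | |- GRing.comm _ (_ * _) => apply: commrM; cm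
 | |- GRing.comm _ (_ ^+ _) => apply: commrX; cm
 | |- GRing.comm _ 1 => apply: commr1
 | |- GRing.comm _ 0 => apply: commr0
 | |- _ => apply: commr_sym; cm2
 end.

Section Aux.
Variable R : pzRingType.
Implicit Types a b c p e f u v x y j r l q t w : R.

Lemma U_lr u l r : l * u = 1 -> u * r = 1 -> in_U u.
Proof.
move=> lu ur; exists r; split => //.
have -> : r = l by rewrite -[l]mulr1 -ur mulrA lu mul1r.
done.
Qed.

Lemma inv_comm u v y : u * v = 1 -> v * u = 1 -> GRing.comm u y -> GRing.comm v y.
Proof.
move=> uv vu Huy; rewrite /GRing.comm.
by rewrite -[v * y]mulr1 -uv mulrA -(mulrA v) -Huy mulrA vu mul1r.
Qed.

Lemma idem_unit0 f : f * f = f -> in_U (1 - f) -> f = 0.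
Proof.
move=> ff [v [h1 h2]].
by rewrite -[f]mulr1 -h1 mulrA mulrBr mulr1 ff subrr mul0r.
Qed.

Lemma J_lmul r j : in_J j -> in_J (r * j).
Proof. by move=> Hj x; rewrite mulrA; apply: Hj. Qed.

Lemma J_qnil b k : (0 < k)%N -> in_J (b ^+ k) -> in_qnil b.
Proof.
move=> k0 Hj x Hx.
have Cbx : GRing.comm b x by rewrite /GRing.comm Hx.
pose c := - (b * x).
pose S := \sum_(i < k) c ^+ i.
have Hw : in_U (1 - c ^+ k).
  have -> : c ^+ k = ((-1) ^+ k * x ^+ k) * b ^+ k.
    rewrite /c exprNn exprMn_comm // -mulrA; congr (_ * _).
    have : GRing.comm (b ^+ k) (x ^+ k) by cm.
    by [].
  exact: Hj.
have geo : 1 - c ^+ k = (1 - c) * S.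
  by rewrite -opprB subrX1 -mulNr opprB.
have CS : GRing.comm S (1 - c).
  have CcS : GRing.comm c S by apply: commr_sum => i _; cm.
  by cm.
have -> : 1 + b * x = 1 - c by rewrite /c opprK.
case: Hw => t [h1 h2].
apply: (U_lr (l:=t * S) (r:=S * t)).
  by rewrite -mulrA CS -geo h2.
by rewrite mulrA -geo h1.
Qed.

Lemma expr_idem p k : p * p = p -> (0 < k)%N -> p ^+ k = p.
Proof.
move=> pp; case: k => // n _; elim: n => [|n IH]; first by rewrite expr1.
by rewrite exprS IH pp.
Qed.

Lemma comm2_comm a p : in_comm2 a p -> GRing.comm a p.
Proof. by move=> H; rewrite /GRing.comm -H. Qed.

Lemma half a p e v : p * p = p -> e * e = e -> GRing.comm p a -> GRing.comm e a ->
  GRing.comm p e -> (a + e) * v = 1 -> v * (a + e) = 1 -> in_qnil (a * p) ->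
  p = p * e.
Proof.
move=> pp ee Cpa Cea Cpe h1 h2 Hq.
have Cva : GRing.comm v a by apply: (inv_comm h1 h2); cm.
have Cvp : GRing.comm v p by apply: (inv_comm h1 h2); cm.
have Cve : GRing.comm v e by apply: (inv_comm h1 h2); cm.
have ef : e * (p - p * e) = 0.
  by rewrite mulrBr mulrA -Cpe -mulrA ee subrr.
have pf : p * (p - p * e) = p - p * e by rewrite mulrBr mulrA pp.
have av : a * v = 1 - e * v by rewrite -h1 mulrDl addrK.
have key : a * p * (v * (p - p * e)) = p - p * e.
  rewrite -mulrA (mulrA p v) -Cvp -mulrA pf mulrA av mulrBl mul1r.
  by rewrite -Cve -mulrA ef mulr0 subr0.
have Cx : GRing.comm (a * p) (- (v * (p - p * e))) by cm.
have := Hq _ (esym Cx).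
rewrite mulrN key => HU.
have ff : (p - p * e) * (p - p * e) = p - p * e.
  have fp : (p - p * e) * p = p - p * e.
    by rewrite mulrBl pp -mulrA -Cpe mulrA pp.
  rewrite mulrBr fp mulrA fp mulrBl -mulrA ee subrr subr0.
  done.
have := idem_unit0 ff HU.
by move/eqP; rewrite subr_eq0 => /eqP.
Qed.

Lemma unique_sp a p e : p * p = p -> e * e = e -> GRing.comm p a -> GRing.comm e a ->
  GRing.comm p e -> in_U (a + p) -> in_U (a + e) -> in_qnil (a * p) -> in_qnil (a * e) ->
  p = e.
Proof.
move=> pp ee Cpa Cea Cpe [v [h1 h2]] [w [k1 k2]] Qp Qe.
have E1 := half pp ee Cpa Cea Cpe k1 k2 Qp.
have E2 := half ee pp Cea Cpa (commr_sym Cpe) h1 h2 Qe.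
by rewrite E1 Cpe -E2.
Qed.

Lemma powp a p k : p * p = p -> GRing.comm a p -> (0 < k)%N ->
  (a * p) ^+ k = a ^+ k * p.
Proof. move=> pp C k0; rewrite exprMn_comm // (expr_idem pp k0) //. Qed.

Lemma J_neg_pow a q k : in_J ((- a) ^+ k * q) -> in_J (a ^+ k * q).
Proof.
move=> H; have := J_lmul ((-1) ^+ k) H.
have s1 : (-1) ^+ k * (-1) ^+ k = 1 :> R.
  by rewrite -exprD addnn -mul2n exprM sqrrN !expr1n.
by rewrite [(- a) ^+ k]exprNn !mulrA s1 mul1r.
Qed.

End Aux.

Theorem theorem4p4 (R : pzRingType) :
  pseudopolar_ring R <-> strongly_pi_rad_clean_ring R /\ quasipolar_ring R.
Proof.
split.
  move=> H; split.
    move=> a; have [q [k [qq Cq U k0 J]]] := H (- a).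
    exists q, k; split => //.
    - by have := comm2_comm Cq; rewrite /GRing.comm mulrN mulNr => /oppr_inj.
    - case: U => v [h1 h2]; exists (- v); split.
        by rewrite mulrN -mulNr opprB addrC.
      by rewrite mulNr -mulrN opprB addrC.
    - exact: J_neg_pow.
  move=> a; have [p [k [pp Cp U k0 J]]] := H a.
  exists p; split => //.
  apply: (J_qnil k0); rewrite powp //; exact: comm2_comm.
move=> [Hs Hq] a.
have [p [pp Cp U Q]] := Hq a.
have [e [n [ee Ce U' n0 J]]] := Hs (- a).
have Cea : GRing.comm e a.
  by move: Ce; rewrite /GRing.comm mulrN mulNr => /oppr_inj.
have Cpa : GRing.comm p a by apply: commr_sym; exact: comm2_comm.
have Cpe : GRing.comm p e by apply: Cp; exact: Cea.
have Ue : in_U (a + e).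
  case: U' => v [h1 h2]; exists (- v); split.
    by rewrite mulrN -mulNr opprD.
  by rewrite mulNr -mulrN opprD.
have Jn : in_J (a ^+ n * e) by exact: J_neg_pow.
have Qe : in_qnil (a * e).
  by apply: (J_qnil n0); rewrite powp //; exact: commr_sym.
have pe := unique_sp pp ee Cpa Cea Cpe U Ue Q Qe.
exists p, n; split => //; by rewrite pe.
Qed.
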